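(* Let $m \geq 0$ and $n \geq 1$ be integers and let $c = (c^t; c^b) = (c^t_1, \ldots, c^t_m; c^b_1, \ldots, c^b_n)$ be a stable configuration on $K_{m,n}^0$. For $j \in \{1, \ldots, n\}$, define $k_j := \left|\{ i \in \{1,\ldots,m\} : c^t_i < j \}\right|$, and let $(\tilde{c}^b_1, \ldots, \tilde{c}^b_n)$ be the non-decreasing rearrangement of $(c^b_1, \ldots, c^b_n)$. Then $c$ is stochastically recurrent if and only if $$\text{for all } j \in \{1,\ldots,n\}: \quad \tilde{c}^b_1 + \cdots + \tilde{c}^b_j \geq k_1 + \cdots + k_j.$$ Moreover, if $c$ is stochastically recurrent, then $\mathrm{level}(c) = c^b_1 + \cdots + c^b_n - (k_1 + \cdots + k_n)$.
   Context: $K_{m,n}^0$ is the complete bipartite graph with ''top'' vertices $v^t_0, v^t_1, \ldots, v^t_m$ and ''bottom'' vertices $v^b_1, \ldots, v^b_n$, with an edge between every top vertex and every bottom vertex; $v^t_0$ is called the sink. A configuration is a vector $c = (c^t_1, \ldots, c^t_m; c^b_1, \ldots, c^b_n)$ of non-negative integers ($c^*_i$ = number of grains at the non-sink vertex $v^*_i$). A non-sink vertex is stable if its number of grains is less than its degree, i.e. $c^t_i < n$, resp. $c^b_j < m+1$; $c$ is stable if all non-sink vertices are stable. Stochastic sandpile model (SSM) with a fixed parameter $p \in (0,1)$: an unstable vertex topples as follows: for each of its neighbours (for a bottom vertex this includes the sink $v^t_0$), independently (and independently of all previous topplings), with probability $p$ it sends one grain to that neighbour, and otherwise keeps that grain;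 grains sent to the sink disappear. Starting from any configuration and repeatedly toppling unstable vertices, one reaches a (random) stable configuration whose law does not depend on the toppling order. Consider the Markov chain on stable configurations which at each step adds a grain to a non-sink vertex chosen uniformly at random and then stabilises according to the SSM. A stable configuration is stochastically recurrent if it is a recurrent state of this Markov chain (appears infinitely often in its long-time running). The level of a configuration is $\mathrm{level}(c) := \sum_{i=1}^m c^t_i + \sum_{j=1}^n c^b_j - mn$. *)

(* Defs.v *)
From mathcomp Require Import all_boot all_order all_algebra.
From Stdlib Require Import Relations.
Set Implicit Arguments. Unset Strict Implicit. Unset Printing Implicit Defensive.

(* Complete bipartite graph K^0_{m,n}: top vertices v^t_0 (sink), v^t_1..v^t_m,
   bottom vertices v^b_1..v^b_n.  Non-sink top vertex v^t_{i+1} is indexed by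
   i : 'I_m, bottom vertex v^b_{j+1} by j : 'I_n.
   Degrees: top vertices have degree n, bottom vertices degree m+1. *)

Definition config (m n : nat) : Type := ({ffun 'I_m -> nat} * {ffun 'I_n -> nat})%type.

Definition stable (m n : nat) (c : config m n) : Prop :=
  (forall i : 'I_m, c.1 i < n) /\ (forall j : 'I_n, c.2 j < m.+1).

(* One SSM toppling of an unstable non-sink vertex, in which the set S of
   neighbours that receive a grain is given explicitly.  In the SSM each
   subset S of neighbours is chosen with probability p^|S| (1-p)^(deg-|S|),
   which is > 0 for every S since 0 < p < 1.  For a bottom vertex the
   boolean [s] records whether a grain is sent to the sink (and disappears). *)
Definition topple_step (m n : nat) (c c' : config m n) : Prop :=
  (exists i : 'I_m, n <= c.1 i /\ exists S : {set 'I_n},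
      c' = ([ffun i' => if i' == i then c.1 i - #|S| else c.1 i'],
            [ffun j => c.2 j + (j \in S)]))
  \/
  (exists j : 'I_n, m.+1 <= c.2 j /\ exists (s : bool) (S : {set 'I_m}),
      c' = ([ffun i => c.1 i + (i \in S)],
            [ffun j' => if j' == j then c.2 j - (s + #|S|) else c.2 j'])).

Definition stabilizes_to (m n : nat) (c c' : config m n) : Prop :=
  clos_refl_trans _ (@topple_step m n) c c' /\ stable c'.

Definition add_grain (m n : nat) (c : config m n) (v : 'I_m + 'I_n) : config m n :=
  match v with
  | inl i => ([ffun i' => c.1 i' + (i' == i)], c.2)
  | inr j => (c.1, [ffun j' => c.2 j' + (j' == j)])
  end.

(* Positive-probability transition of the Markov chain on stable configurations
   (the vertex is chosen uniformly, so every vertex has probability > 0). *)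
Definition chain_step (m n : nat) (c c' : config m n) : Prop :=
  stable c /\ exists v : 'I_m + 'I_n, stabilizes_to (add_grain c v) c'.

Definition chain_reach (m n : nat) := clos_refl_trans _ (@chain_step m n).

(* Recurrent state of the (finite-state) Markov chain: every state reachable
   with positive probability from c leads back to c with positive probability. *)
Definition stoch_recurrent (m n : nat) (c : config m n) : Prop :=
  stable c /\ forall c', chain_reach c c' -> chain_reach c' c.

Definition kk (m n : nat) (c : config m n) (j : nat) : nat :=
  #|[set i : 'I_m | c.1 i < j]|.

Definition sorted_bottom (m n : nat) (c : config m n) : seq nat :=
  sort leq [seq c.2 j | j <- enum 'I_n].

Definition level (m n : nat) (c : config m n) : int :=
  ((\sum_(i < m) c.1 i + \sum_(j < n) c.2 j)%N%:Z - (m * n)%N%:Z)%R.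

(* Main.v *)
Require Import Defs.
From mathcomp Require Import all_boot all_order all_algebra all_fingroup.
From Stdlib Require Import Relations.
From mathcomp Require Import zify.


Lemma sum_ind (I : finType) (A : {pred I}) :
  \sum_(i : I) (i \in A : nat) = #|A|.
Proof.
rewrite -sum1_card [RHS]big_mkcond /=; apply: eq_bigr => i _; by case: (i \in A).
Qed.

Lemma sum_lt (I : finType) (F G : I -> nat) (i0 : I) :
  (forall i, F i <= G i) -> F i0 < G i0 -> \sum_i F i < \sum_i G i.
Proof.
move=> H H0; rewrite (bigD1 i0) //= [X in _ < X](bigD1 i0) //=.
have : \sum_(i | i != i0) F i <= \sum_(i | i != i0) G i by apply: leq_sum.
lia.
Qed.

Lemma top_heavy (I : finType) (f : I -> nat) (k : nat) : k <= #|I| ->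
  exists T : {set I}, #|T| = k /\ forall i i', i \in T -> i' \notin T -> f i' <= f i.
Proof.
elim: k => [|k IH] Hk.
  by exists set0; split; [rewrite cards0 | move=> i i'; rewrite in_set0].
have [T [HT HP]] := IH (ltnW Hk).
have : 0 < #|~: T| by have := cardsC T; lia.
move/card_gt0P => [i0 Hi0].
case: (arg_maxnP f Hi0) => ist Hin Hmax.
exists (ist |: T); split.
  have Hin' : ist \in ~: T by exact: Hin.
  rewrite cardsU1 HT; move: Hin'; rewrite in_setC => ->; done.
move=> i i'; rewrite !in_setU1 negb_or => /orP [/eqP -> | HiT] /andP [Hne HiT'].
  by apply: Hmax; have : i' \in ~: T by rewrite in_setC.
by apply: HP.
Qed.

Lemma set_of_card (I : finType) (k : nat) : k <= #|I| -> exists S : {set I}, #|S| = k.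
Proof. move=> Hk; have [T [HT _]] := @top_heavy I (fun _ => 0) k Hk; by exists T. Qed.

Lemma sum_sub_sorted (f : nat -> nat) (n : nat) :
  (forall a b, a <= b -> b < n -> f a <= f b) ->
  forall L : seq nat, uniq L -> all (fun x => x < n) L ->
  \sum_(l < size L) f l <= \sum_(x <- L) f x.
Proof.
elim: n => [|n IH] Hf L Hu Ha.
  case: L Hu Ha => [|x L] //= _; by rewrite big_ord0.
have Hf' : forall a b, a <= b -> b < n -> f a <= f b by move=> a b ? ?; apply: Hf => //; lia.
case Hn: (n \in L).
- rewrite (perm_big _ (perm_to_rem Hn)) big_cons.
  have Hur : uniq (rem n L) by apply: rem_uniq.
  have Har : all (fun x => x < n) (rem n L).
    apply/allP => x; rewrite (mem_rem_uniq _ Hu) /= => /andP [Hxn HxL].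
    move/allP: Ha => /(_ x HxL); move: Hxn => /eqP; lia.
  have := IH Hf' _ Hur Har; rewrite size_rem //.
  have Hs : size L <= n.+1.
    rewrite -(size_iota 0 n.+1); apply: uniq_leq_size => // x HxL.
    rewrite mem_iota; move/allP: Ha => /(_ x HxL); lia.
  have Hs0 : 0 < size L by case: L Hn {Hu Ha Hur Har Hs}.
  have -> : size L = (size L).-1.+1 by lia.
  rewrite big_ord_recr /=.
  have : f (size L).-1 <= f n by apply: Hf; lia.
  lia.
- apply: IH => //; apply/allP => x HxL; move/allP: Ha => /(_ x HxL).
  have : x != n by apply/eqP => Hx; rewrite -Hx HxL in Hn.
  move/eqP; lia.
Qed.

Set Implicit Arguments. Unset Strict Implicit.

Lemma sorted_perm (m n : nat) (c : config m n) :
  exists p : {perm 'I_n}, forall i : 'I_n, nth 0 (sorted_bottom c) i = c.2 (p i).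
Proof.
set t := map_tuple c.2 (ord_tuple n).
have : perm_eq (sorted_bottom c) t.
  by rewrite /sorted_bottom /= perm_sort.
move/tuple_permP => [p Hp]; exists p => i.
by rewrite Hp nth_mktuple tnth_map tnth_ord_tuple.
Qed.

Lemma sorted_mono (m n : nat) (c : config m n) a b : a <= b -> b < n ->
  nth 0 (sorted_bottom c) a <= nth 0 (sorted_bottom c) b.
Proof.
move=> Hab Hb.
have Hs : size (sorted_bottom c) = n by rewrite size_sort size_map size_enum_ord.
apply: (sorted_leq_nth leq_trans leqnn 0 (sort_sorted leq_total _)); rewrite ?inE ?Hs //.
lia.
Qed.

Lemma card_init (n j : nat) : j <= n -> #|[set i : 'I_n | i < j]| = j.
Proof.
move=> Hj; rewrite -sum1_card.
rewrite (eq_bigl (fun i : 'I_n => i < j)); last by move=> i; rewrite inE.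
by rewrite -(big_ord_widen n (fun _ => 1) Hj) sum1_card card_ord.
Qed.

Lemma sortA (m n : nat) (c : config m n) (B : {set 'I_n}) :
  \sum_(l < #|B|) nth 0 (sorted_bottom c) l <= \sum_(x in B) c.2 x.
Proof.
have [p Hp] := sorted_perm c.
rewrite (reindex_inj (@perm_inj _ p)) /=.
rewrite (eq_bigr (fun i : 'I_n => nth 0 (sorted_bottom c) i)); last by move=> i _; rewrite Hp.
set A := [set i | p i \in B].
have HA : #|A| = #|B| by rewrite -(card_preimset B (@perm_inj _ p)).
rewrite (eq_bigl (fun i => i \in A)); last by move=> i; rewrite inE.
have -> : \sum_(i in A) nth 0 (sorted_bottom c) i =
   \sum_(x <- [seq nat_of_ord i | i <- enum A]) nth 0 (sorted_bottom c) x
  by rewrite big_map big_enum.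
rewrite -HA cardE -(size_map (fun i : 'I_n => nat_of_ord i)).
apply: (@sum_sub_sorted _ n).
- by move=> a b; apply: sorted_mono.
- rewrite map_inj_uniq ?enum_uniq //; exact: val_inj.
- by apply/allP => x /mapP [i _ ->].
Qed.

Lemma sortB (m n : nat) (c : config m n) (j : nat) : j <= n ->
  exists B : {set 'I_n}, #|B| = j /\
    \sum_(x in B) c.2 x = \sum_(l < j) nth 0 (sorted_bottom c) l.
Proof.
move=> Hj; have [p Hp] := sorted_perm c.
exists (p @: [set i : 'I_n | i < j]); split.
  by rewrite card_imset ?card_init //; exact: perm_inj.
rewrite big_imset /=; last by move=> x y _ _; apply: perm_inj.
rewrite (big_ord_widen n _ Hj).
apply: eq_big => [i|i _]; by rewrite ?inE ?Hp.
Qed.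


Definition Qc (m n : nat) (c : config m n) : Prop :=
  forall B : {set 'I_n}, \sum_(i < m) (#|B| - c.1 i) <= \sum_(j in B) c.2 j.

Lemma kk_sum (m n : nat) (c : config m n) (j : nat) :
  \sum_(1 <= l < j.+1) kk c l = \sum_(i < m) (j - c.1 i).
Proof.
elim: j => [|j IH].
  by rewrite big_geq // big1 // => i _; rewrite sub0n.
rewrite big_nat_recr //= IH /kk.
rewrite -sum_ind -big_split /=; apply: eq_bigr => i _.
rewrite inE; case: (leqP (c.1 i) j) => H; rewrite ?ltnS ?H /=; lia.
Qed.

Lemma Q_cond (m n : nat) (c : config m n) : Qc c <->
  (forall j : nat, 1 <= j <= n ->
        \sum_(l < j) nth 0 (sorted_bottom c) l >= \sum_(1 <= l < j.+1) kk c l).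
Proof.
split.
- move=> HQ j /andP [_ Hj]; have [B [HB HS]] := sortB c Hj.
  rewrite kk_sum -HS -HB; exact: HQ.
- move=> Hc B; case: (posnP #|B|) => HB.
    by rewrite HB big1 // => i _; rewrite sub0n.
  have HBn : #|B| <= n by have := max_card (mem B); rewrite card_ord.
  have := Hc #|B| (introT andP (conj HB HBn)); rewrite kk_sum => H.
  exact: leq_trans H (sortA c B).
Qed.

Lemma level_eq (m n : nat) (c : config m n) : stable c ->
  level c = ((\sum_(j < n) c.2 j)%N%:Z - (\sum_(1 <= l < n.+1) kk c l)%N%:Z)%R.
Proof.
move=> [Ht _]; rewrite kk_sum /level.
have E : \sum_(i < m) (n - c.1 i) + \sum_(i < m) c.1 i = m * n.
  rewrite -big_split /=.
  rewrite (eq_bigr (fun _ => n)); last by move=> i _; rewrite subnK // ltnW.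
  by rewrite sum_nat_const card_ord.
move: E.
set a := \sum_(i < m) (n - c.1 i); set b := \sum_(i < m) c.1 i; set d := \sum_(j < n) c.2 j.
move=> E; rewrite -E. lia.
Qed.


Lemma sum_in_ind (I : finType) (B S : {set I}) :
  \sum_(j in B) (j \in S : nat) = #|B :&: S|.
Proof.
rewrite big_mkcond /= -sum_ind; apply: eq_bigr => j _; rewrite in_setI.
by case: (j \in B).
Qed.

Lemma sum_notin (I : finType) (S : {set I}) :
  \sum_(i : I) (1 - (i \in S)) = #|I| - #|S|.
Proof.
rewrite (eq_bigr (fun i => (i \in ~: S) : nat)); last by move=> i _; rewrite in_setC; case: (i \in S).
rewrite sum_ind; have := cardsC S; lia.
Qed.

Lemma arith1 (n b c0 s X Z u i : nat) : u + i = b + s -> u <= n -> b <= n -> s <= n -> n <= c0 ->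
  b - c0 + X <= Z -> b - (c0 - s) + X <= Z + i.
Proof. lia. Qed.

Lemma arith2 (m L Y W c s' b : nat) : b <= 1 -> L <= Y + (m - s') -> Y <= W -> m < c -> s' <= m ->
  L <= c - (b + s') + W.
Proof. lia. Qed.

Lemma Q_topple (m n : nat) (c c' : config m n) : topple_step c c' -> Qc c -> Qc c'.
Proof.
case=> [[i0 [Hn [S ->]]] | [j0 [Hm [s [S ->]]]]] HQ B; have HQB := HQ B; rewrite /=.
- rewrite [X in _ <= X](eq_bigr (fun j => c.2 j + (j \in S))); last by move=> j _; rewrite ffunE.
  rewrite big_split /= sum_in_ind.
  rewrite (bigD1 i0) //= ffunE eqxx.
  move: HQB; rewrite (bigD1 i0) //= => HQB.
  rewrite (eq_bigr (fun i => #|B| - c.1 i)); last by move=> i /negbTE Hi; rewrite ffunE Hi.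
  have HU := cardsUI B S.
  have HUn' : #|B :|: S| <= n by have := max_card (mem (B :|: S)); rewrite card_ord.
  have HBn : #|B| <= n by have := max_card (mem B); rewrite card_ord.
  have HSn : #|S| <= n by have := max_card (mem S); rewrite card_ord.
  move: HQB; set X := \sum_(i < m | i != i0) (#|B| - c.1 i); set Y := \sum_(i | i != i0) (#|B| - c.1 i).
  set Z := \sum_(j in B) c.2 j. clearbody X Y Z. exact: (arith1 HU HUn' HBn HSn Hn).
- have HSm : #|S| <= m by have := max_card (mem S); rewrite card_ord.
  case HjB: (j0 \in B).
  + have HQ' := HQ (B :\ j0).
    have Hc : #|B| = 1 + #|B :\ j0| by rewrite (cardsD1 j0 B) HjB.
    have HS : \sum_(j in B :\ j0) c.2 j = \sum_(j in B | j != j0) c.2 j.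
      by apply: eq_bigl => j; rewrite in_setD1 andbC.
    rewrite [X in _ <= X](bigD1 j0) //= ffunE eqxx.
    rewrite [X in _ <= _ + X](eq_bigr (fun j => c.2 j)); last by move=> j /andP [_ /negbTE Hj]; rewrite ffunE Hj.
    have HL : \sum_(i < m) (#|B| - [ffun i => c.1 i + (i \in S)] i) <=
              \sum_(i < m) ((#|B :\ j0| - c.1 i) + (1 - (i \in S))).
      apply: leq_sum => i _; rewrite ffunE Hc; case: (i \in S) => /=; lia.
    move: HL HQ'; rewrite big_split /= sum_notin card_ord -HS => HL HQ'.
    exact: (arith2 (leq_b1 s) HL HQ' Hm HSm).
  + rewrite [X in _ <= X](eq_bigr (fun j => c.2 j)); last first.
      by move=> j Hj; rewrite ffunE; case: eqP => // E; rewrite -E Hj in HjB.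
    apply: leq_trans HQB; apply: leq_sum => i _; by rewrite ffunE leq_sub2l // leq_addr.
Qed.


Lemma Q_mono (m n : nat) (c c' : config m n) :
  (forall i, c.1 i <= c'.1 i) -> (forall j, c.2 j <= c'.2 j) -> Qc c -> Qc c'.
Proof.
move=> H1 H2 HQ B; apply: leq_trans (leq_trans (HQ B) _).
  apply: leq_sum => i _; exact: leq_sub2l.
apply: leq_sum => j _; exact: H2.
Qed.

Lemma Q_add (m n : nat) (c : config m n) v : Qc c -> Qc (add_grain c v).
Proof.
apply: Q_mono; case: v => [i0|j0] x /=; rewrite ?ffunE ?leq_addr //.
Qed.

Lemma Q_topples (m n : nat) (c c' : config m n) :
  clos_refl_trans _ (@topple_step m n) c c' -> Qc c -> Qc c'.
Proof.
elim=> [x y H|x|x y z _ IH1 _ IH2] //; last by move=> /IH1 /IH2.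
exact: Q_topple.
Qed.

Lemma Q_reach (m n : nat) (c c' : config m n) : chain_reach c c' -> Qc c -> Qc c'.
Proof.
elim=> [x y [_ [v [Ht _]]]|x|x y z _ IH1 _ IH2] //; last by move=> /IH1 /IH2.
by move=> HQ; apply: Q_topples Ht _; apply: Q_add.
Qed.

Lemma stable_reach (m n : nat) (c c' : config m n) : chain_reach c c' -> stable c -> stable c'.
Proof.
elim=> [x y [_ [v [_ Hs]]]|x|x y z _ IH1 _ IH2] //; last by move=> /IH1 /IH2.
Qed.

Definition cmax (m n : nat) : config m n := ([ffun _ => n.-1], [ffun _ => m]).

Lemma Q_cmax (m n : nat) : Qc (cmax m n).
Proof.
move=> B /=.
rewrite [X in _ <= X](eq_bigr (fun _ => m)); last by move=> j _; rewrite ffunE.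
rewrite [X in _ <= X]sum_nat_const.
have H : \sum_(i < m) (#|B| - [ffun _ => n.-1] i) <= \sum_(i < m) #|B|.
  apply: leq_sum => i _; exact: leq_subr.
apply: leq_trans H _.
by rewrite sum_nat_const card_ord mulnC.
Qed.

Definition mu (m n : nat) (c : config m n) :=
  \sum_(i < m) (n.-1 - c.1 i) + \sum_(j < n) (m - c.2 j).

Lemma mu0 (m n : nat) (c : config m n) : stable c -> mu c = 0 -> c = cmax m n.
Proof.
case: c => [ct cb] [/= Ht Hb]; rewrite /mu /= => Hmu.
rewrite /cmax; congr pair; apply/ffunP => x; rewrite ffunE.
+ have : n.-1 - ct x == 0.
    by rewrite -leqn0 -Hmu (bigD1 x) //= -addnA leq_addr.
  have := Ht x; rewrite subn_eq0 -!subn1; move: (ct x) => k; lia.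
+ have : m - cb x == 0.
    by rewrite -leqn0 -Hmu (bigD1 x) //= addnC -addnA leq_addr.
  have := Hb x; rewrite subn_eq0; move: (cb x) => k; lia.
Qed.

Lemma reach_cmax (m n : nat) (c : config m n) : 0 < n -> stable c -> chain_reach c (cmax m n).
Proof.
move=> Hn.
have [N HN] : exists N, mu c <= N by exists (mu c).
elim: N c HN => [|N IH] c HN Hs.
  have -> : c = cmax m n by apply: mu0 => //; lia.
  exact: rt_refl.
case: (posnP (mu c)) => Hmu.
  rewrite (mu0 Hs Hmu); exact: rt_refl.
case: Hs => [Ht Hb].
have [v [Hv Hlt]] : exists v, stable (add_grain c v) /\ mu (add_grain c v) < mu c.
  case: (boolP [exists i, c.1 i < n.-1]) => [/existsP [i Hi]|/existsP Hnt].
  + exists (inl i); split.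
      split => [i'|j] /=; last exact: Hb; rewrite ffunE.
      case: eqP => [->|_]; rewrite ?addn0 ?addn1 //; move: Hi; rewrite -subn1; move: (c.1 i) => k; lia.
    rewrite /mu ltn_add2r /=; apply: sum_lt (i) _ _.
      by move=> i'; rewrite ffunE leq_sub2l // leq_addr.
    rewrite ffunE eqxx addn1; move: Hi; move: (c.1 i) => k; lia.
  + case: (boolP [exists j, c.2 j < m]) => [/existsP [j Hj]|/existsP Hnb].
    * exists (inr j); split.
        split => [i|j'] /=; first exact: Ht; rewrite ffunE.
        case: eqP => [->|_]; rewrite ?addn0 ?addn1 //; move: Hj; move: (c.2 j) => k; lia.
      rewrite /mu ltn_add2l /=; apply: sum_lt (j) _ _.
        by move=> j'; rewrite ffunE leq_sub2l // leq_addr.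
      rewrite ffunE eqxx addn1; move: Hj; move: (c.2 j) => k; lia.
    * exfalso; move: Hmu; rewrite /mu.
      rewrite big1 ?add0n; last first.
        move=> i _; apply/eqP; rewrite subn_eq0; apply/negP => H.
        apply: Hnt; exists i; move: H; move: (c.1 i) => k; lia.
      rewrite big1 //; move=> j _; apply/eqP; rewrite subn_eq0; apply/negP => H.
      apply: Hnb; exists j; move: H; move: (c.2 j) => k; lia.
apply: rt_trans (rt_step _ _ _ _ _) (IH _ _ Hv).
  split; [by split | exists v; split => //; exact: rt_refl].
lia.
Qed.


Lemma sink_topples (m n : nat) (S : {set 'I_n}) (d : config m n) :
  (forall j, j \in S -> m < d.2 j) ->
  clos_refl_trans _ (@topple_step m n) d (d.1, [ffun j => d.2 j - (j \in S)]).
Proof.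
have [k Hk] : exists k, #|S| = k by exists #|S|.
elim: k S d Hk => [|k IH] S d Hk HS.
  have -> : (d.1, [ffun j => d.2 j - (j \in S)]) = d.
    rewrite [RHS]surjective_pairing; congr pair; apply/ffunP => x.
    by rewrite ffunE (cards0_eq Hk) in_set0 subn0.
  exact: rt_refl.
have : 0 < #|S| by rewrite Hk.
move/card_gt0P => [j0 Hj0].
pose d1 : config m n := ([ffun i => d.1 i + (i \in (set0 : {set 'I_m}))],
   [ffun j' => if j' == j0 then d.2 j0 - (true + #|(set0 : {set 'I_m})|) else d.2 j']).
apply: rt_trans (rt_step _ _ _ _ _) _; first last.
  have := IH (S :\ j0) d1.
  have -> : (d1.1, [ffun j => d1.2 j - (j \in S :\ j0)]) = (d.1, [ffun j => d.2 j - (j \in S)]).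
    congr pair; apply/ffunP => x; rewrite !ffunE ?in_set0 ?addn0 //.
    rewrite in_setD1; case: eqP => [->|_] /=; first by rewrite Hj0 cards0 subn0.
    done.
  apply.
    by move: Hk; rewrite (cardsD1 j0 S) Hj0 => -[].
  move=> j; rewrite in_setD1 => /andP [/negbTE Hj HjS]; rewrite ffunE Hj; exact: HS.
right; exists j0; split; first exact: HS.
by exists true, set0.
Qed.

Lemma lemA (m n : nat) (c : config m n) : 0 < n -> stable c -> (forall j, c.2 j = m) ->
  chain_reach (cmax m n) c.
Proof.
move=> Hn.
have [N HN] : exists N, \sum_(i < m) (n.-1 - c.1 i) <= N by eexists; exact: leqnn.
elim: N c HN => [|N IH] c HN Hs Hbm.
- have -> : c = cmax m n.
    apply: mu0 => //; rewrite /mu [X in _ + X]big1 ?addn0; last by move=> j _; rewrite Hbm subnn.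
    lia.
  exact: rt_refl.
- case: (boolP [exists i, c.1 i < n.-1]) => [/existsP [i Hi]|/existsP Hnt]; last first.
    have -> : c = cmax m n.
      apply: mu0 => //; rewrite /mu [X in _ + X]big1 ?addn0; last by move=> j _; rewrite Hbm subnn.
      apply: big1 => i _; apply/eqP; rewrite subn_eq0; apply/negP => H.
      apply: Hnt; exists i; move: H; move: (c.1 i) => k; lia.
    exact: rt_refl.
  case: Hs => [Ht Hb].
  pose c' : config m n := ([ffun i' => if i' == i then n.-1 else c.1 i'], c.2).
  have Hs' : stable c'.
    split => [i'|j] /=; last exact: Hb; rewrite ffunE.
    case: eqP => _; [rewrite -subn1; lia | exact: Ht].
  apply: rt_trans (IH c' _ Hs' Hbm) _.
    have : \sum_(i0 < m) (n.-1 - c'.1 i0) < \sum_(i0 < m) (n.-1 - c.1 i0).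
      apply: sum_lt (i) _ _.
        move=> i'; rewrite /= ffunE; case: eqP => [->|_] //; rewrite subnn //.
      rewrite /= ffunE eqxx subnn; move: Hi; move: (c.1 i) => k; lia.
    lia.
  apply: rt_step; split => //; exists (inl i); split; last by split.
  have HSn : n - c.1 i <= #|'I_n| by rewrite card_ord leq_subr.
  have [S HS] := @set_of_card _ _ HSn.
  pose a := add_grain c' (inl i).
  have Ha : n <= a.1 i by rewrite /= !ffunE eqxx; rewrite -subn1; lia.
  pose t1 : config m n := ([ffun i' => if i' == i then a.1 i - #|S| else a.1 i'],
                           [ffun j => a.2 j + (j \in S)]).
  apply: (@rt_trans _ _ a t1 c).
    by apply: rt_step; left; exists i; split; [exact: Ha | exists S; reflexivity].
  have := @sink_topples m n S t1.
  have -> : (t1.1, [ffun j => t1.2 j - (j \in S)]) = c.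
    rewrite [RHS]surjective_pairing; congr pair; apply/ffunP => x; rewrite !ffunE /=.
      case: eqP => [->|_]; rewrite ?eqxx.
        rewrite HS addn1 prednK //; have := Ht i; move: Hi (c.1 i) => _ k; lia.
      by rewrite addn0.
    by rewrite addnK.
  apply => j Hj; rewrite /= ffunE Hj /= Hbm addn1 //.
Qed.

Lemma arith3 (L X Y cb m t : nat) : L <= X + t -> X <= cb + Y -> t = m - cb -> cb < m -> L <= m + Y.
Proof. lia. Qed.

Lemma arith4 (L X Y cb m t : nat) : L + (m - t) <= X -> X <= cb + Y -> t = m - cb -> cb < m -> L <= Y.
Proof. lia. Qed.

Lemma arith5 (k b : nat) : k <= b -> b - (k - 0) + (1 - 0) <= 1 + b - k.
Proof. lia. Qed.

Lemma arith6 (k b : nat) : b < k -> b - (k - 1) <= b - k.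
Proof. lia. Qed.

Lemma lemB (m n : nat) (c : config m n) : 0 < n -> stable c -> Qc c ->
  chain_reach (cmax m n) c.
Proof.
move=> Hn.
have [N HN] : exists N, \sum_(j < n) (m - c.2 j) <= N by eexists; exact: leqnn.
elim: N c HN => [|N IH] c HN Hs HQ.
  apply: lemA => // j; case: Hs => _ /(_ j).
  have : m - c.2 j <= 0 by apply: leq_trans HN; rewrite (bigD1 j) //= leq_addr.
  move: (c.2 j) => k; lia.
case: (boolP [exists j, c.2 j < m]) => [/existsP [b Hbl]|/existsP Hnb]; last first.
  apply: lemA => // j; case: Hs => _ /(_ j) H; apply/eqP; rewrite eqn_leq -ltnS H /=.
  by rewrite leqNgt; apply/negP => H'; apply: Hnb; exists j.
case: (Hs) => [Ht Hb].
have Hk : m - c.2 b <= #|'I_m| by rewrite card_ord leq_subr.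
have [T [HT HP]] := @top_heavy _ c.1 _ Hk.
have HT1 : forall i, i \in T -> 0 < c.1 i.
  move=> i0 Hi0; rewrite lt0n; apply/negP => /eqP H0.
  have H := HQ [set b]; move: H; rewrite cards1 big_set1.
  have : \sum_(i < m) ((i \notin T) + (i == i0)) <= \sum_(i < m) (1 - c.1 i).
    apply: leq_sum => i _; case: (boolP (i \in T)) => HiT /=.
      case: eqP => [->|_]; rewrite ?H0 //.
    have := HP _ _ Hi0 HiT; rewrite H0 leqn0 => /eqP ->.
    case: eqP => [E|_] //; by rewrite E Hi0 in HiT.
  rewrite big_split /=.
  have -> : \sum_(i < m) (i \notin T : nat) = m - #|T|.
    have := sum_notin T; rewrite card_ord => <-; apply: eq_bigr => i _; by case: (i \in T).
  have -> : \sum_(i < m) (i == i0 : nat) = 1.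
    rewrite (eq_bigr (fun i => (i \in [set i0]) : nat)); last by move=> i _; rewrite in_set1.
    by rewrite sum_ind cards1.
  rewrite HT; move: (\sum_(i < m) (1 - c.1 i)) Hbl => X; lia.
pose c' : config m n := ([ffun i => c.1 i - (i \in T)], [ffun j => if j == b then m else c.2 j]).
have Hs' : stable c'.
  split => [i|j] /=; rewrite ffunE.
    by apply: leq_ltn_trans (Ht i); apply: leq_subr.
  by case: eqP => _.
have HQ' : Qc c'.
  move=> B /=.
  case Hbb: (b \in B).
  - rewrite [X in _ <= X](bigD1 b) //= ffunE eqxx.
    rewrite [X in _ <= _ + X](eq_bigr (fun j => c.2 j)); last first.
      by move=> j /andP [_ /negbTE Hj]; rewrite ffunE Hj.
    have HQB := HQ B; move: HQB; rewrite [X in _ <= X](bigD1 b) //= => HQB.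
    have HL : \sum_(i < m) (#|B| - [ffun i => c.1 i - (i \in T)] i) <=
              \sum_(i < m) ((#|B| - c.1 i) + (i \in T)).
      apply: leq_sum => i _; rewrite ffunE; case: (i \in T); move: (c.1 i) => k /=; lia.
    move: HL; rewrite big_split /= sum_ind => HL.
    exact: (arith3 HL HQB HT Hbl).
  - rewrite [X in _ <= X](eq_bigr (fun j => c.2 j)); last first.
      by move=> j Hj; rewrite ffunE; case: eqP => // E; rewrite -E Hj in Hbb.
    case: (boolP [exists i in T, c.1 i <= #|B|]) => [/existsP [i0 /andP [Hi0T Hi0]] | /existsP Hno].
    + have HQb := HQ (b |: B).
      rewrite cardsU1 Hbb big_setU1 ?Hbb //= in HQb.
      have HL : \sum_(i < m) ((#|B| - [ffun i => c.1 i - (i \in T)] i) + (1 - (i \in T))) <=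
                \sum_(i < m) (1 + #|B| - c.1 i).
        apply: leq_sum => i _; rewrite ffunE; case: (boolP (i \in T)) => HiT /=.
          have := HT1 _ HiT; move: (c.1 i) => k; lia.
        have Hci : c.1 i <= #|B| := leq_trans (HP _ _ Hi0T HiT) Hi0.
        move: Hci; move: (c.1 i) => k; exact: arith5.
      move: HL; rewrite big_split /= sum_notin card_ord => HL.
      exact: (arith4 HL HQb HT Hbl).
    + apply: leq_trans (HQ B); apply: leq_sum => i _; rewrite ffunE.
      case: (boolP (i \in T)) => HiT /=; last by rewrite subn0.
      have : #|B| < c.1 i.
        by rewrite ltnNge; apply/negP => H; apply: Hno; exists i; rewrite HiT H.
      move: (c.1 i) => k; exact: arith6.
apply: rt_trans (IH c' _ Hs' HQ') _.
  have : \sum_(j < n) (m - c'.2 j) < \sum_(j < n) (m - c.2 j).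
    apply: sum_lt (b) _ _.
      by move=> j; rewrite /= ffunE; case: eqP => [->|_] //; rewrite subnn.
    by rewrite /= ffunE eqxx subnn subn_gt0.
  lia.
apply: rt_step; split => //; exists (inr b); split => //.
apply: rt_step; right; exists b; split.
  by rewrite /= !ffunE !eqxx addn1.
exists true, T.
rewrite [LHS]surjective_pairing; congr pair; apply/ffunP => x; rewrite !ffunE /=.
  case: (boolP (x \in T)) => Hx /=; rewrite ?subn0 ?addn0 //.
  by rewrite subn1 addn1 prednK // HT1.
case: eqP => [->|Hx]; rewrite ?ffunE ?eqxx.
  rewrite HT addn1 add1n subSS; have := Hbl; move: (c.2 b) => k; lia.
by rewrite addn0.
Qed.


Theorem theorem2p2 (m n : nat) (c : config m n) :
  0 < n -> stable c ->
  (stoch_recurrent c <->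
     (forall j : nat, 1 <= j <= n ->
        \sum_(l < j) nth 0 (sorted_bottom c) l >= \sum_(1 <= l < j.+1) kk c l))
  /\
  (stoch_recurrent c ->
     level c = ((\sum_(j < n) c.2 j)%N%:Z - (\sum_(1 <= l < n.+1) kk c l)%N%:Z)%R).
Proof.
move=> Hn Hs; split; last by move=> _; exact: level_eq.
split.
- move=> [_ Hback]; apply/Q_cond.
  apply: (Q_reach (Hback _ (reach_cmax Hn Hs))); exact: Q_cmax.
- move/Q_cond => HQ; split => // c' Hcc'.
  apply: rt_trans (reach_cmax Hn (stable_reach Hcc' Hs)) (lemB Hn Hs HQ).
Qed.
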